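(* For $x=re^{i\theta}\in C$, the squared norms of the Euclidean and spherical shape operators of $M_x$ at $x$ are $$\|A^E(x)\|^2=\frac{ng}{r^2}\csc^2 g\theta\,(1+\delta\cos g\theta),\qquad \|A^S(x)\|^2=\frac{ng}{r^2}\csc^2 g\theta\,(1+\delta\cos g\theta)-\frac{n}{r^2}.$$
   Context: Let $M^n$ be a compact isoparametric hypersurface in the unit sphere $S^{n+1}\subset\mathbb{R}^{n+2}$ (constant principal curvatures) with $g$ distinct principal curvatures; then $g\in\{1,2,3,4,6\}$. Fix $x_0\in M$ and identify the 2-dimensional normal space $\nu_{x_0}M$ of $M$ in $\mathbb{R}^{n+2}$ with $\mathbb{C}$ so that the two focal submanifolds $M_+$, $M_-$ ($\dim M_+\le\dim M_-$) meet the normal circle at $1$ and $e^{i\pi/g}$ (the intersection points closest to $x_0$). The Weyl chamber is $C=\{re^{i\theta}:r>0,\ 0<\theta<\pi/g\}$. For $k=1,\dots,g$ let $\theta_k=k\pi/g-\pi/2$, $\alpha_k=e^{i\theta_k}$, and $m_k=m_1$ for $k$ odd, $m_k=m_2$ for $k$ even, where $(m_1,m_2)$, $m_1\le m_2$, is the multiplicity data of the principal curvatures; $m_1=m_2$ if $g$ is odd, and $(m_1+m_2)g=2n$. For $x\in C$, $M_x=\{p+\tilde\xi(p):p\in M\}$ where $\tilde\xi$ is the parallel normal field on $M$ with $\tilde\xi(x_0)=x-x_0$; it is an $n$-dimensional isoparametric submanifold of $\mathbb{R}^{n+2}$ lying in $S^{n+1}(|x|)$, with normal space $\nu_{x_0}M$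 at $x$, and $T_xM_x=\oplus_kE_k$, $\dim E_k=m_k$, with Euclidean shape operator $A_\xi|_{E_k}=\langle\xi,-\alpha_k/\langle x,\alpha_k\rangle\rangle\mathrm{Id}$ ($\langle\cdot,\cdot\rangle$ the real inner product on $\mathbb{C}=\mathbb{R}^2$). $H^E(x),A^E(x)$ denote mean curvature vector and shape operator of $M_x$ at $x$ in $\mathbb{R}^{n+2}$; $H^S(x),A^S(x)$ those of $M_x$ as a hypersurface of $S^{n+1}(|x|)$; $\|A\|^2$ is the sum of squared Hilbert–Schmidt norms over an orthonormal normal basis. Set $\delta=(m_2-m_1)/(m_2+m_1)$ if $g\ge2$ and $\delta=0$ if $g=1$, and let $\theta_{\min}\in(0,\pi/g)$ be defined by $\cos g\theta_{\min}=-\delta$. *)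

(* Defs.v *)
From Stdlib Require Import Reals Lra Lia.
Open Scope R_scope.

(* The normal plane nu_{x0} M identified with C = R^2, points as pairs. *)
Definition R2 := (R * R)%type.
Definition dot (u v : R2) : R := fst u * fst v + snd u * snd v.
Definition polar (r t : R) : R2 := (r * cos t, r * sin t).

Fixpoint sum1 (g : nat) (f : nat -> R) : R :=
  match g with
  | O => 0
  | S g' => sum1 g' f + f (S g')
  end.

Definition theta_k (g k : nat) : R := INR k * PI / INR g - PI / 2.
Definition alpha (g k : nat) : R2 := polar 1 (theta_k g k).

Definition mult (m1 m2 k : nat) : nat := if Nat.odd k then m1 else m2.

(* Eigenvalue of the Euclidean shape operator A_xi of M_x at x on E_k:
   A_xi|_{E_k} = <xi, -alpha_k/<x,alpha_k>> Id. *)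
Definition shape_eig (g : nat) (x xi : R2) (k : nat) : R :=
  dot xi (alpha g k) * (- / dot x (alpha g k)).

(* Squared Hilbert-Schmidt norm of A_xi on T_x M_x = (+)_k E_k, dim E_k = m_k *)
Definition hs_sq (g m1 m2 : nat) (x xi : R2) : R :=
  sum1 g (fun k => INR (mult m1 m2 k) * (shape_eig g x xi k) ^ 2).

Definition orthonormal2 (u v : R2) : Prop :=
  dot u u = 1 /\ dot v v = 1 /\ dot u v = 0.

(* ||A^E(x)||^2 computed with the orthonormal basis (u,v) of the normal plane *)
Definition normAE_sq (g m1 m2 : nat) (x u v : R2) : R :=
  hs_sq g m1 m2 x u + hs_sq g m1 m2 x v.

Definition delta (g m1 m2 : nat) : R :=
  if (2 <=? g)%nat then (INR m2 - INR m1) / (INR m2 + INR m1) else 0.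

(* Main.v *)
Require Import Defs.
From Stdlib Require Import Reals Lra Lia.
From Stdlib Require Nsatz.
Open Scope R_scope.

Lemma sc1 x : sin x ^ 2 + cos x ^ 2 = 1.
Proof. pose proof (sin2_cos2 x). unfold Rsqr in H. lra. Qed.

Lemma L2 x : sin (2*x) <> 0 ->
  / sin x ^ 2 + / sin (x + PI/2) ^ 2 = 4 / sin (2*x) ^ 2.
Proof.
  intros H. rewrite sin_2a in *. rewrite sin_plus, cos_PI2, sin_PI2.
  assert (Hs : sin x <> 0) by (intro E; apply H; rewrite E; ring).
  assert (Hc : cos x <> 0) by (intro E; apply H; rewrite E; ring).
  replace (/ sin x ^ 2 + / (sin x * 0 + cos x * 1) ^ 2)
    with ((sin x ^2 + cos x ^2) / (sin x ^ 2 * cos x ^ 2)) by (field; repeat split; auto).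
  rewrite sc1. field. auto.
Qed.

Lemma L3 x : sin (3*x) <> 0 ->
  / sin x ^ 2 + / sin (x + PI/3) ^ 2 + / sin (x + 2*PI/3) ^ 2 = 9 / sin (3*x) ^ 2.
Proof.
  intros H.
  set (q := sqrt 3).
  assert (Hq : q^2 = 3) by (unfold q; pose proof (sqrt_sqrt 3); lra || (simpl; rewrite Rmult_1_r; apply sqrt_sqrt; lra)).
  set (s := sin x). set (c := cos x).
  assert (E1 : sin (x + PI/3) = s/2 + q*c/2).
  { rewrite sin_plus, sin_PI3, cos_PI3. unfold s, c, q. field. }
  assert (E2 : sin (x + 2*PI/3) = q*c/2 - s/2).
  { replace (x + 2*PI/3) with ((x + PI/3) + PI/3) by field.
    rewrite sin_plus, E1, cos_plus, sin_PI3, cos_PI3. fold q s c.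
    assert (Hqq : q*q - 3 = 0) by (rewrite <- Hq; ring).
    match goal with |- ?L = ?R => apply Rminus_diag_uniq; replace (L - R) with ((q*q-3)*(-s/4)) by field end.
    rewrite Hqq; ring. }
  assert (E3 : sin (3*x) = 3*s*c^2 - s^3).
  { replace (3*x) with (2*x + x) by ring. rewrite sin_plus, sin_2a, cos_2a. fold s c. ring. }
  rewrite E1, E2, E3 in *.
  assert (Hs : s <> 0) by (intro E; apply H; rewrite E; ring).
  assert (HAB : (s/2 + q*c/2) * (q*c/2 - s/2) = (3*c^2 - s^2)/4).
  { replace ((s/2 + q*c/2) * (q*c/2 - s/2)) with ((q^2*c^2 - s^2)/4) by field. rewrite Hq. field. }
  assert (HA : s/2 + q*c/2 <> 0).
  { intro E. apply H. replace (3*s*c^2 - s^3) with (4*s*((3*c^2-s^2)/4)) by field.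
    rewrite <- HAB, E. ring. }
  assert (HB : q*c/2 - s/2 <> 0).
  { intro E. apply H. replace (3*s*c^2 - s^3) with (4*s*((3*c^2-s^2)/4)) by field.
    rewrite <- HAB, E. ring. }
  replace (/ s ^ 2 + / (s / 2 + q * c / 2) ^ 2 + / (q * c / 2 - s / 2) ^ 2)
    with ((((s / 2 + q * c / 2) * (q * c / 2 - s / 2))^2 + s^2 * ((s^2 + q^2*c^2)/2))
         / (s * ((s / 2 + q * c / 2) * (q * c / 2 - s / 2)))^2) by (field; repeat split; auto; [intro E; apply HB; replace (q*c/2 - s/2) with ((q*c-s)/2) by field; rewrite E; field | intro E; apply HA; replace (s/2 + q*c/2) with ((s+q*c)/2) by field; rewrite E; field]).
  rewrite HAB, Hq.
  replace (((3 * c ^ 2 - s ^ 2) / 4) ^ 2 + s ^ 2 * ((s ^ 2 + 3 * c ^ 2) / 2))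
    with (9 * (s^2 + c^2)^2 / 16) by field.
  unfold s, c. rewrite sc1. fold s c. field. repeat split; auto. intro E. apply H. replace (3*s*c^2 - s^3) with (s*(3*c^2-s^2)) by ring. rewrite E. ring.
Qed.

Lemma Lfin y (m1 m2 : R) : sin (2*y) <> 0 -> m1 + m2 <> 0 ->
  m1 / cos y ^ 2 + m2 / sin y ^ 2
  = 2 * (m1 + m2) / sin (2*y) ^ 2 * (1 + (m2 - m1)/(m2 + m1) * cos (2*y)).
Proof.
  intros H Hm. rewrite sin_2a in *. rewrite cos_2a.
  assert (Hs : sin y <> 0) by (intro E; apply H; rewrite E; ring).
  assert (Hc : cos y <> 0) by (intro E; apply H; rewrite E; ring).
  pose proof (sc1 y).
  replace (m1 / cos y ^ 2 + m2 / sin y ^ 2)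
    with ((m1 * sin y ^2 + m2 * cos y^2) / (sin y^2 * cos y^2)) by (field; repeat split; auto).
  rewrite <- H0. field. repeat split; auto; rewrite Rplus_comm; auto.
Qed.

Module OrthAux.
Import Nsatz.
Open Scope R_scope.
Lemma orth u v w : (fst u * fst u + snd u * snd u = 1) -> (fst v * fst v + snd v * snd v = 1) ->
  fst u * fst v + snd u * snd v = 0 ->
  (fst u * fst w + snd u * snd w)^2 + (fst v * fst w + snd v * snd w)^2 = fst w * fst w + snd w * snd w.
Proof.
  destruct u as [a b], v as [c d], w as [w1 w2]; simpl. intros. nsatz.
Qed.
End OrthAux.
Notation orth := OrthAux.orth.


Lemma dot_x_alpha g k r t :
  dot (polar r t) (alpha g k) = r * sin (INR k * PI / INR g - t).
Proof.
  unfold dot, polar, alpha, theta_k; simpl.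
  rewrite cos_minus, sin_minus, cos_PI2, sin_PI2, sin_minus. ring.
Qed.

Lemma alpha_norm g k : dot (alpha g k) (alpha g k) = 1.
Proof. unfold dot, alpha, polar; simpl. pose proof (sc1 (theta_k g k)). nra. Qed.

Lemma sum1_ext g f h : (forall k, (1 <= k <= g)%nat -> f k = h k) -> sum1 g f = sum1 g h.
Proof.
  induction g; intros H; simpl; auto.
  rewrite IHg by (intros; apply H; lia). rewrite H by lia. auto.
Qed.

Lemma sum1_add g f h : sum1 g (fun k => f k + h k) = sum1 g f + sum1 g h.
Proof. induction g; simpl; [ring| rewrite IHg; ring]. Qed.

Lemma sum1_sub g f h : sum1 g (fun k => f k - h k) = sum1 g f - sum1 g h.
Proof. induction g; simpl; [ring| rewrite IHg; ring]. Qed.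

Lemma sum1_scal g c f : sum1 g (fun k => c * f k) = c * sum1 g f.
Proof. induction g; simpl; [ring| rewrite IHg; ring]. Qed.

Lemma keyT (g m1 m2 n : nat) (theta : R)
  (Hg : g = 1%nat \/ g = 2%nat \/ g = 3%nat \/ g = 4%nat \/ g = 6%nat)
  (Hm1 : (1 <= m1)%nat)
  (Hodd : Nat.odd g = true -> m1 = m2)
  (Hn : ((m1 + m2) * g = 2 * n)%nat)
  (Hth : 0 < theta < PI / INR g) :
  sum1 g (fun k => INR (mult m1 m2 k) / sin (INR k * PI / INR g - theta) ^ 2)
  = INR n * INR g * / (sin (INR g * theta)) ^ 2 * (1 + delta g m1 m2 * cos (INR g * theta)).
Proof.
  assert (Hn' : 2 * INR n = (INR m1 + INR m2) * INR g).
  { replace 2 with (INR 2) by (simpl; ring). rewrite <- plus_INR, <- !mult_INR, Hn. auto. }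
  assert (Hm1' : 1 <= INR m1) by (replace 1 with (INR 1) by auto; apply le_INR; auto).
  assert (Hm2' : 0 <= INR m2) by apply pos_INR.
  assert (Hms : INR m1 + INR m2 <> 0) by lra.
  assert (I2 : INR 2 = 2) by (simpl; ring).
  assert (I3 : INR 3 = 3) by (simpl; ring).
  assert (I4 : INR 4 = 4) by (simpl; ring).
  assert (I5 : INR 5 = 5) by (simpl; ring).
  assert (I6 : INR 6 = 6) by (simpl; ring).
  assert (I1 : INR 1 = 1) by (simpl; ring).
  destruct Hg as [->|[->|[->|[->| ->]]]];
    unfold delta; cbv [sum1 mult Nat.odd Nat.even negb Nat.leb];
    rewrite ?I1, ?I2, ?I3, ?I4, ?I5, ?I6 in *.
  -
    rewrite Hodd in * by reflexivity.
    replace (1 * PI / 1 - theta) with (PI - theta) by field. rewrite sin_PI_x.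
    assert (sin theta <> 0) by (apply Rgt_not_eq, sin_gt_0; lra).
    replace (1 * theta) with theta by ring.
    replace (INR n) with (INR m2) by lra. field. auto.
  -
    replace (1 * PI / 2 - theta) with (PI/2 - theta) by field. rewrite sin_shift.
    replace (2 * PI / 2 - theta) with (PI - theta) by field. rewrite sin_PI_x.
    assert (H2 : sin (2*theta) <> 0) by (apply Rgt_not_eq, sin_gt_0; lra).
    replace (0 + INR m1 / cos theta ^ 2 + INR m2 / sin theta ^ 2)
      with (INR m1 / cos theta ^ 2 + INR m2 / sin theta ^ 2) by ring.
    rewrite Lfin by auto.
    replace (INR n) with (INR m1 + INR m2) by lra. field. split; auto. lra.
  -
    rewrite <- Hodd in * by reflexivity.
    replace (1 * PI / 3 - theta) with (PI/3 - theta) by field.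
    replace (2 * PI / 3 - theta) with (PI/3 - theta + PI/3) by field.
    replace (3 * PI / 3 - theta) with (PI/3 - theta + 2*PI/3) by field.
    assert (H3 : sin (3*theta) <> 0) by (apply Rgt_not_eq, sin_gt_0; lra).
    assert (E : sin (3 * (PI/3 - theta)) = sin (3*theta)).
    { replace (3 * (PI/3 - theta)) with (PI - 3*theta) by field. apply sin_PI_x. }
    replace (0 + INR m1 / sin (PI / 3 - theta) ^ 2 + INR m1 / sin (PI / 3 - theta + PI / 3) ^ 2 +
     INR m1 / sin (PI / 3 - theta + 2 * PI / 3) ^ 2)
      with (INR m1 * (/ sin (PI / 3 - theta) ^ 2 + / sin (PI / 3 - theta + PI / 3) ^ 2 +
     / sin (PI / 3 - theta + 2 * PI / 3) ^ 2)) by (unfold Rdiv; ring).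
    rewrite L3 by (rewrite E; auto). rewrite E.
    replace (INR n) with (3 * INR m1) by lra. field. auto.
  -
    replace (1 * PI / 4 - theta) with (PI/4 - theta) by field.
    replace (2 * PI / 4 - theta) with (PI/2 - theta) by field.
    replace (3 * PI / 4 - theta) with (PI/4 - theta + PI/2) by field.
    replace (4 * PI / 4 - theta) with (PI/2 - theta + PI/2) by field.
    assert (H4 : sin (4*theta) <> 0) by (apply Rgt_not_eq, sin_gt_0; lra).
    assert (H4' : sin (2 * (2*theta)) <> 0) by (replace (2*(2*theta)) with (4*theta) by ring; auto).
    assert (Hs2 : sin (2*theta) <> 0) by (intro E; apply H4'; rewrite sin_2a, E; ring).
    assert (Hc2 : cos (2*theta) <> 0) by (intro E; apply H4'; rewrite sin_2a, E; ring).
    assert (E1 : sin (2 * (PI/4 - theta)) = cos (2*theta)).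
    { replace (2 * (PI/4 - theta)) with (PI/2 - 2*theta) by field. apply sin_shift. }
    assert (E2 : sin (2 * (PI/2 - theta)) = sin (2*theta)).
    { replace (2 * (PI/2 - theta)) with (PI - 2*theta) by field. apply sin_PI_x. }
    replace (0 + INR m1 / sin (PI / 4 - theta) ^ 2 + INR m2 / sin (PI / 2 - theta) ^ 2 +
      INR m1 / sin (PI / 4 - theta + PI / 2) ^ 2 + INR m2 / sin (PI / 2 - theta + PI / 2) ^ 2)
      with (INR m1 * (/ sin (PI / 4 - theta) ^ 2 + / sin (PI / 4 - theta + PI / 2) ^ 2)
          + INR m2 * (/ sin (PI / 2 - theta) ^ 2 + / sin (PI / 2 - theta + PI / 2) ^ 2))
      by (unfold Rdiv; ring).
    rewrite (L2 (PI/4 - theta)) by (rewrite E1; auto).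
    rewrite (L2 (PI/2 - theta)) by (rewrite E2; auto).
    rewrite E1, E2.
    replace (INR m1 * (4 / cos (2 * theta) ^ 2) + INR m2 * (4 / sin (2 * theta) ^ 2))
      with (4 * (INR m1 / cos (2 * theta) ^ 2 + INR m2 / sin (2 * theta) ^ 2)) by (unfold Rdiv; ring).
    rewrite Lfin by auto.
    replace (2 * (2 * theta)) with (4 * theta) by ring.
    replace (INR n) with (2 * (INR m1 + INR m2)) by lra. field. split; auto. lra.
  -
    replace (1 * PI / 6 - theta) with (PI/6 - theta) by field.
    replace (2 * PI / 6 - theta) with (PI/3 - theta) by field.
    replace (3 * PI / 6 - theta) with (PI/6 - theta + PI/3) by field.
    replace (4 * PI / 6 - theta) with (PI/3 - theta + PI/3) by field.
    replace (5 * PI / 6 - theta) with (PI/6 - theta + 2*PI/3) by field.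
    replace (6 * PI / 6 - theta) with (PI/3 - theta + 2*PI/3) by field.
    assert (H6 : sin (6*theta) <> 0) by (apply Rgt_not_eq, sin_gt_0; lra).
    assert (H6' : sin (2 * (3*theta)) <> 0) by (replace (2*(3*theta)) with (6*theta) by ring; auto).
    assert (Hs3 : sin (3*theta) <> 0) by (intro E; apply H6'; rewrite sin_2a, E; ring).
    assert (Hc3 : cos (3*theta) <> 0) by (intro E; apply H6'; rewrite sin_2a, E; ring).
    assert (E1 : sin (3 * (PI/6 - theta)) = cos (3*theta)).
    { replace (3 * (PI/6 - theta)) with (PI/2 - 3*theta) by field. apply sin_shift. }
    assert (E2 : sin (3 * (PI/3 - theta)) = sin (3*theta)).
    { replace (3 * (PI/3 - theta)) with (PI - 3*theta) by field. apply sin_PI_x. }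
    replace (0 + INR m1 / sin (PI / 6 - theta) ^ 2 + INR m2 / sin (PI / 3 - theta) ^ 2 +
      INR m1 / sin (PI / 6 - theta + PI / 3) ^ 2 + INR m2 / sin (PI / 3 - theta + PI / 3) ^ 2 +
      INR m1 / sin (PI / 6 - theta + 2 * PI / 3) ^ 2 + INR m2 / sin (PI / 3 - theta + 2 * PI / 3) ^ 2)
      with (INR m1 * (/ sin (PI / 6 - theta) ^ 2 + / sin (PI / 6 - theta + PI / 3) ^ 2
                      + / sin (PI / 6 - theta + 2 * PI / 3) ^ 2)
          + INR m2 * (/ sin (PI / 3 - theta) ^ 2 + / sin (PI / 3 - theta + PI / 3) ^ 2
                      + / sin (PI / 3 - theta + 2 * PI / 3) ^ 2))
      by (unfold Rdiv; ring).
    rewrite (L3 (PI/6 - theta)) by (rewrite E1; auto).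
    rewrite (L3 (PI/3 - theta)) by (rewrite E2; auto).
    rewrite E1, E2.
    replace (INR m1 * (9 / cos (3 * theta) ^ 2) + INR m2 * (9 / sin (3 * theta) ^ 2))
      with (9 * (INR m1 / cos (3 * theta) ^ 2 + INR m2 / sin (3 * theta) ^ 2)) by (unfold Rdiv; ring).
    rewrite Lfin by auto.
    replace (2 * (3 * theta)) with (6 * theta) by ring.
    replace (INR n) with (3 * (INR m1 + INR m2)) by lra. field. split; auto. lra.
Qed.

Theorem lemma4p7 (g m1 m2 n : nat) (r theta : R)
  (Hg : g = 1%nat \/ g = 2%nat \/ g = 3%nat \/ g = 4%nat \/ g = 6%nat)
  (Hm1 : (1 <= m1)%nat) (Hm12 : (m1 <= m2)%nat)
  (Hodd : Nat.odd g = true -> m1 = m2)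
  (Hn : ((m1 + m2) * g = 2 * n)%nat)
  (Hr : 0 < r) (Hth : 0 < theta < PI / INR g) :
  let x := polar r theta in
  (forall u v : R2, orthonormal2 u v ->
     normAE_sq g m1 m2 x u v
     = INR n * INR g / r ^ 2 * / (sin (INR g * theta)) ^ 2
         * (1 + delta g m1 m2 * cos (INR g * theta))) /\
  (forall nu : R2, dot nu nu = 1 -> dot nu x = 0 ->
     hs_sq g m1 m2 x nu
     = INR n * INR g / r ^ 2 * / (sin (INR g * theta)) ^ 2
         * (1 + delta g m1 m2 * cos (INR g * theta)) - INR n / r ^ 2).
Proof.
  intros x.
  pose proof (keyT g m1 m2 n theta Hg Hm1 Hodd Hn Hth) as KT.
  assert (Hg1 : (1 <= g)%nat) by (destruct Hg as [->|[->|[->|[->| ->]]]]; lia).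
  assert (Hpsum : sum1 g (fun k => INR (mult m1 m2 k)) = INR n).
  { assert (Hn' : 2 * INR n = (INR m1 + INR m2) * INR g).
    { replace 2 with (INR 2) by (simpl; ring). rewrite <- plus_INR, <- !mult_INR, Hn. auto. }
    destruct Hg as [->|[->|[->|[->| ->]]]]; cbv [sum1 mult Nat.odd Nat.even negb];
      simpl in Hn'; try (rewrite Hodd in * by reflexivity); lra. }
  assert (HS : forall k, (1 <= k <= g)%nat -> sin (INR k * PI / INR g - theta) <> 0).
  { intros k Hk.
    assert (HG : 0 < INR g) by (apply lt_0_INR; lia).
    assert (Hk1 : 1 <= INR k) by (replace 1 with (INR 1) by auto; apply le_INR; lia).
    assert (Hkg : INR k <= INR g) by (apply le_INR; lia).
    assert (Ha : 0 < PI / INR g) by (apply Rdiv_lt_0_compat; [apply PI_RGT_0| auto]).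
    replace (INR k * PI / INR g) with (INR k * (PI / INR g)) by (field; lra).
    assert (INR g * (PI / INR g) = PI) by (field; lra).
    apply Rgt_not_eq, sin_gt_0; nra. }
  assert (Hr0 : r <> 0) by lra.
  split.
  - intros u v [Hu [Hv Huv]]. unfold normAE_sq, hs_sq. rewrite <- sum1_add.
    transitivity (sum1 g (fun k => / r ^ 2 * (INR (mult m1 m2 k) / sin (INR k * PI / INR g - theta) ^ 2))).
    + apply sum1_ext. intros k Hk. unfold shape_eig, x. rewrite dot_x_alpha.
      pose proof (orth u v (alpha g k) Hu Hv Huv) as O. pose proof (alpha_norm g k) as An.
      unfold dot in *. rewrite An in O. specialize (HS k Hk).
      set (S := sin (INR k * PI / INR g - theta)) in *.
      set (a := fst u * fst (alpha g k) + snd u * snd (alpha g k)) in *.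
      set (b := fst v * fst (alpha g k) + snd v * snd (alpha g k)) in *.
      replace (INR (mult m1 m2 k) * (a * - / (r * S)) ^ 2 + INR (mult m1 m2 k) * (b * - / (r * S)) ^ 2)
        with (INR (mult m1 m2 k) * (a ^ 2 + b ^ 2) / (r * S) ^ 2) by (field; auto).
      rewrite O. field. auto.
    + rewrite sum1_scal, KT. field. split; auto.
      destruct Hg as [->|[->|[->|[->| ->]]]]; simpl; apply Rgt_not_eq, sin_gt_0; simpl in Hth; lra.
  - intros nu Hnu Hnux. unfold hs_sq.
    assert (He : dot nu (polar 1 theta) = 0).
    { unfold x, dot, polar in *; simpl in *. 
      apply (Rmult_eq_reg_l r); [|auto]. transitivity (fst nu * (r * cos theta) + snd nu * (r * sin theta)); [ring| rewrite Hnux; ring]. }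
    assert (He1 : dot (polar 1 theta) (polar 1 theta) = 1).
    { unfold dot, polar; simpl. pose proof (sc1 theta). nra. }
    transitivity (sum1 g (fun k => / r ^ 2 * (INR (mult m1 m2 k) / sin (INR k * PI / INR g - theta) ^ 2)
                                  - / r ^ 2 * INR (mult m1 m2 k))).
    + apply sum1_ext. intros k Hk. unfold shape_eig, x. rewrite dot_x_alpha.
      pose proof (orth nu (polar 1 theta) (alpha g k) Hnu He1 He) as O. pose proof (alpha_norm g k) as An.
      pose proof (dot_x_alpha g k 1 theta) as D1.
      unfold dot in *. rewrite An, D1 in O. specialize (HS k Hk).
      set (S := sin (INR k * PI / INR g - theta)) in *.
      set (a := fst nu * fst (alpha g k) + snd nu * snd (alpha g k)) in *.
      replace (INR (mult m1 m2 k) * (a * - / (r * S)) ^ 2)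
        with (INR (mult m1 m2 k) * (a ^ 2) / (r * S) ^ 2) by (field; auto).
      replace (a ^ 2) with (1 - S ^ 2) by lra. field. auto.
    + rewrite sum1_sub, !sum1_scal, KT, Hpsum. field. split; auto.
      destruct Hg as [->|[->|[->|[->| ->]]]]; simpl; apply Rgt_not_eq, sin_gt_0; simpl in Hth; lra.
Qed.
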